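(* Let $\theta\in\mathbb R\setminus\mathbb Q$. Then the cyclic cohomology of $\mathcal A_\theta^{alg}$ with coefficients in the twisted dual satisfies $HC^1(\mathcal A_\theta^{alg},{}_{-1}\mathcal A_\theta^{alg*})=0$ and $HC^2(\mathcal A_\theta^{alg},{}_{-1}\mathcal A_\theta^{alg*})\cong\mathbb C^4$.
   Context: Let $\lambda=e^{2\pi i\theta}$. $\mathcal A_\theta^{alg}$ is the complex algebra of finite linear combinations $\sum x_{n,m}U_1^nU_2^m$ generated by invertible $U_1,U_2$ with $U_2U_1=\lambda U_1U_2$. Its linear dual $\mathcal A_\theta^{alg*}$ is the space of formal series $\sum\varphi_{n,m}U_1^nU_2^m$. $\sigma$ is the automorphism $\sigma(U_j)=U_j^{-1}$, and ${}_{-1}\mathcal A_\theta^{alg*}$ is $\mathcal A_\theta^{alg*}$ with bimodule structure $\alpha\cdot a=\sigma(\alpha)a$, $a\cdot\alpha=a\alpha$. $HC^\bullet(\mathcal A_\theta^{alg},{}_{-1}\mathcal A_\theta^{alg*})$ denotes the $\sigma$-twisted cyclic cohomology, i.e. the cyclic cohomology fitting into Connes' $S,B,I$ long exact sequence with the Hochschild cohomology $H^\bullet(\mathcal A_\theta^{alg},{}_{-1}\mathcal A_\theta^{alg*})$. *)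

(* Defs.v *)
From Stdlib Require Import Reals ZArith.
Open Scope R_scope.

Record C : Type := mkC { Re : R; Im : R }.
Definition C0 : C := mkC 0 0.
Definition C1 : C := mkC 1 0.
Definition Cadd (z w : C) : C := mkC (Re z + Re w) (Im z + Im w).
Definition Copp (z : C) : C := mkC (- Re z) (- Im z).
Definition Cmul (z w : C) : C :=
  mkC (Re z * Re w - Im z * Im w) (Re z * Im w + Im z * Re w).

Fixpoint Csum (f : nat -> C) (k : nat) : C :=
  match k with O => C0 | S k' => Cadd (Csum f k') (f k') end.

Definition sgn (k : nat) : C := if Nat.even k then C1 else Copp C1.

(** * The algebra A_theta^alg on its monomial basis
    The basis element (n,m) : Z*Z stands for U1^n U2^m.
    Since U2 U1 = lambda U1 U2 we have
      U1^n U2^m * U1^p U2^q = lambda^(m p) U1^(n+p) U2^(m+q). *)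
Definition basis : Type := (Z * Z)%type.

Definition lam_pow (theta : R) (k : Z) : C :=
  mkC (cos (2 * PI * theta * IZR k)) (sin (2 * PI * theta * IZR k)).

Definition mulc (theta : R) (x y : basis) : C := lam_pow theta (snd x * fst y)%Z.
Definition mulb (x y : basis) : basis := (fst x + fst y, snd x + snd y)%Z.

Definition sig (x : basis) : basis := (- fst x, - snd x)%Z.

(** * Cochains
    Hom(A^{(x)n}, A^* ) = (A^{(x)(n+1)})^* ;  f |-> phi(a0,...,an) := f(a1..an)(a0).
    A multilinear functional is determined by its (arbitrary) values on tuples of
    basis monomials; a tuple (a0,...,an) is encoded as a : nat -> basis, and an
    n-cochain is a function that only depends on the entries 0..n. *)
Definition cochain : Type := (nat -> basis) -> C.

Definition local (n : nat) (phi : cochain) : Prop :=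
  forall a a' : nat -> basis, (forall i, (i <= n)%nat -> a i = a' i) -> phi a = phi a'.

Definition merge (i : nat) (a : nat -> basis) : nat -> basis :=
  fun j => if Nat.ltb j i then a j
           else if Nat.eqb j i then mulb (a i) (a (S i)) else a (S j).

(** With (alpha . g)(x) = g(x sigma(alpha)) and (g . alpha)(x) = g(alpha x):
    (b phi)(a0,..,a_{n+1}) = phi(a0 sigma(a1), a2, .., a_{n+1})
        + sum_{i=1}^n (-1)^i phi(a0,..,a_i a_{i+1},..,a_{n+1})
        + (-1)^{n+1} phi(a_{n+1} a0, a1, .., an). *)
Definition hoch_b (theta : R) (n : nat) (phi : cochain) : cochain :=
  fun a =>
    let t0 := Cmul (mulc theta (a O) (sig (a 1%nat)))
                   (phi (fun j => if Nat.eqb j 0 then mulb (a O) (sig (a 1%nat))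
                                  else a (S j))) in
    let mid := Csum (fun k => let i := S k in
                      Cmul (sgn i) (Cmul (mulc theta (a i) (a (S i))) (phi (merge i a)))) n in
    let tl := Cmul (sgn (S n))
                (Cmul (mulc theta (a (S n)) (a O))
                      (phi (fun j => if Nat.eqb j 0 then mulb (a (S n)) (a O) else a j))) in
    Cadd t0 (Cadd mid tl).

(** * Cyclic cochains
    Via psi(c0,..,cn) := phi(c0, sigma c1, .., sigma cn), the complex (C^*, b)
    above is identified with the standard sigma-twisted Hochschild complex
    (twist in the last term), whose cyclic cochains are those with
    psi(c0,..,cn) = (-1)^n psi(sigma(cn), c0, .., c_{n-1}). *)
Definition sigma_conj (phi : cochain) : cochain :=
  fun a => phi (fun i => if Nat.eqb i 0 then a O else sig (a i)).

Definition twisted_cyclic_std (n : nat) (psi : cochain) : Prop :=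
  forall a : nat -> basis,
    psi a = Cmul (sgn n) (psi (fun i => if Nat.eqb i 0 then sig (a n) else a (i - 1)%nat)).

Definition is_cyclic (n : nat) (phi : cochain) : Prop :=
  local n phi /\ twisted_cyclic_std n (sigma_conj phi).

Definition is_cyclic_cocycle (theta : R) (n : nat) (phi : cochain) : Prop :=
  is_cyclic n phi /\ forall a, hoch_b theta n phi a = C0.

Definition is_cyclic_coboundary (theta : R) (n : nat) (phi : cochain) : Prop :=
  exists psi, is_cyclic n psi /\ forall a, phi a = hoch_b theta n psi a.

Definition lin4 (c : nat -> C) (f : nat -> cochain) : cochain :=
  fun a => Csum (fun k => Cmul (c k) (f k a)) 4.

(** HC^{n+1} = 0 *)
Definition HC_vanishes (theta : R) (n : nat) : Prop :=
  forall phi, is_cyclic_cocycle theta (S n) phi -> is_cyclic_coboundary theta n phi.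

Definition HC_dim4 (theta : R) (n : nat) : Prop :=
  exists f : nat -> cochain,
    (forall k, (k < 4)%nat -> is_cyclic_cocycle theta (S n) (f k)) /\
    (forall phi, is_cyclic_cocycle theta (S n) phi ->
       exists c : nat -> C, is_cyclic_coboundary theta n
         (fun a => Cadd (phi a) (Copp (lin4 c f a)))) /\
    (forall c : nat -> C, is_cyclic_coboundary theta n (lin4 c f) ->
       forall k, (k < 4)%nat -> c k = C0).

(* Main.v *)
From Stdlib Require Import Reals ZArith Lia Lra Ring.
Require Import Defs.
Open Scope R_scope.

Lemma Ceq (z w : C) : Re z = Re w -> Im z = Im w -> z = w.
Proof. destruct z, w; simpl; intros -> ->; reflexivity. Qed.

Definition Csub (z w : C) : C := Cadd z (Copp w).

Lemma Cring : ring_theory C0 C1 Cadd Cmul Csub Copp (@eq C).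
Proof.
  split; intros; apply Ceq; destruct_all C; unfold Csub, C0, C1; simpl; ring.
Qed.
Add Ring Cr : Cring.

Lemma lam_add t a b : Cmul (lam_pow t a) (lam_pow t b) = lam_pow t (a + b).
Proof.
  unfold lam_pow; apply Ceq; simpl; rewrite plus_IZR;
  replace (2 * PI * t * (IZR a + IZR b)) with (2*PI*t*IZR a + 2*PI*t*IZR b) by ring.
  - rewrite cos_plus; ring.
  - rewrite sin_plus; ring.
Qed.

Lemma lam0 t : lam_pow t 0 = C1.
Proof. unfold lam_pow; apply Ceq; simpl; rewrite Rmult_0_r; [apply cos_0|apply sin_0]. Qed.

Lemma lam_mul_assoc t a b x : Cmul (lam_pow t a) (Cmul (lam_pow t b) x) = Cmul (lam_pow t (a+b)) x.
Proof. rewrite <- lam_add; ring. Qed.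

Lemma Cmul_addr z x y : Cmul z (Cadd x y) = Cadd (Cmul z x) (Cmul z y). Proof. ring. Qed.
Lemma Cmul_oppr z x : Cmul z (Copp x) = Copp (Cmul z x). Proof. ring. Qed.
Lemma Cmul_0r z : Cmul z C0 = C0. Proof. ring. Qed.
Lemma Cmul_1l x : Cmul C1 x = x. Proof. ring. Qed.
Lemma Cmul_m1l x : Cmul (Copp C1) x = Copp x. Proof. ring. Qed.

Lemma Cfin (L R S : C) : Cadd L (Copp R) = S -> S = C0 -> L = R.
Proof. intros H1 H2. rewrite H2 in H1. transitivity (Cadd (Cadd L (Copp R)) R); [ring|]. rewrite H1; ring. Qed.

Definition P1 (phi : cochain) (x : basis) : C := phi (fun _ => x).
Definition P2 (phi : cochain) (x y : basis) : C := phi (fun j => match j with O => x | _ => y end).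
Definition P3 (phi : cochain) (x y z : basis) : C :=
  phi (fun j => match j with O => x | 1%nat => y | _ => z end).

Lemma loc1 phi (H : local 0 phi) f : phi f = P1 phi (f O).
Proof. apply H; intros i Hi; destruct i; [reflexivity|lia]. Qed.
Lemma loc2 phi (H : local 1 phi) f : phi f = P2 phi (f O) (f 1%nat).
Proof. apply H; intros i Hi; destruct i as [|[|i]]; [reflexivity|reflexivity|lia]. Qed.
Lemma loc3 phi (H : local 2 phi) f : phi f = P3 phi (f O) (f 1%nat) (f 2%nat).
Proof. apply H; intros i Hi; destruct i as [|[|[|i]]]; try reflexivity; lia. Qed.

Ltac pair_eq := match goal with |- (?a, ?b) = (?c, ?d) => f_equal; ring end.

Ltac unify_atoms :=
  repeat match goal with
  | |- context [P3 ?f ?x ?y ?z] => match goal with |- context [P3 f ?x' ?y' ?z'] =>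
       assert_fails (constr_eq (x,y,z) (x',y',z'));
       replace (P3 f x' y' z') with (P3 f x y z) by (f_equal; pair_eq) end
  | |- context [P2 ?f ?x ?y] => match goal with |- context [P2 f ?x' ?y'] =>
       assert_fails (constr_eq (x,y) (x',y'));
       replace (P2 f x' y') with (P2 f x y) by (f_equal; pair_eq) end
  | |- context [P1 ?f ?x] => match goal with |- context [P1 f ?x'] =>
       assert_fails (constr_eq x x');
       replace (P1 f x') with (P1 f x) by (f_equal; pair_eq) end
  | |- context [lam_pow ?t ?e] =>
       assert_fails (constr_eq e 0%Z);
       replace (lam_pow t e) with (lam_pow t 0) by (f_equal; ring)
  | |- context [lam_pow ?t ?e] => match goal with |- context [lam_pow t ?e'] =>
       assert_fails (constr_eq e e');
       replace (lam_pow t e') with (lam_pow t e) by (f_equal; ring) end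
  end.

Ltac cnorm := repeat (rewrite ?Cmul_addr, ?Cmul_oppr, ?Cmul_0r, ?Cmul_1l, ?Cmul_m1l, ?lam_mul_assoc).

Definition kk (y : basis) : basis := (Z.div (fst y) 2, Z.div (snd y) 2).
Definition hE (a0 k : basis) : Z := (fst k * snd k - snd a0 * fst k)%Z.

Definition h1 (t : R) (phi : cochain) : cochain := fun a =>
  Cmul (lam_pow t (hE (a O) (kk (a O))))
       (phi (fun j => match j with O => mulb (a O) (sig (kk (a O))) | _ => sig (kk (a O)) end)).
Definition h2 (t : R) (phi : cochain) : cochain := fun a =>
  Cmul (lam_pow t (hE (a O) (kk (mulb (a O) (a 1%nat)))))
       (phi (fun j => match j with O => mulb (a O) (sig (kk (mulb (a O) (a 1%nat))))
                              | 1%nat => sig (kk (mulb (a O) (a 1%nat))) | _ => a 1%nat end)).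

Lemma divshift (x y a : Z) : x = (y - 2 * a)%Z -> Z.div x 2 = (Z.div y 2 - a)%Z.
Proof. intros ->. replace (y - 2*a)%Z with (y + (-a) * 2)%Z by ring. rewrite Z.div_add by lia. ring. Qed.

Ltac cnorm_in H := repeat (rewrite ?Cmul_addr, ?Cmul_oppr, ?Cmul_0r, ?Cmul_1l, ?Cmul_m1l, ?lam_mul_assoc in H).
Ltac scaleH t H e := apply (f_equal (Cmul (lam_pow t e))) in H; cnorm_in H.

Ltac fin1 H := rewrite ?lam0, ?Cmul_1l; rewrite ?lam0, ?Cmul_1l in H;
  match type of H with ?S = C0 =>
   first [apply (Cfin _ _ S); [ring|exact H] | apply (Cfin _ _ (Copp S)); [ring| rewrite H; ring]] end.

Lemma Cfin3 L R L1 R1 L2 R2 L3 R3 c1 c2 c3 :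
  Cadd L (Copp R) = Cadd (Cmul c1 (Cadd L1 (Copp R1))) (Cadd (Cmul c2 (Cadd L2 (Copp R2))) (Cmul c3 (Cadd L3 (Copp R3)))) ->
  L1 = R1 -> L2 = R2 -> L3 = R3 -> L = R.
Proof. intros H h1 h2 h3; subst. apply (Cfin _ _ _ H). ring. Qed.

Ltac pickc k := first [ k C1 | k (Copp C1) | k C0 | k (Cadd C1 C1) | k (Copp (Cadd C1 C1))].
Ltac lin3 H1 H2 H3 :=
  match type of H1 with ?L1 = ?R1 => match type of H2 with ?L2 = ?R2 => match type of H3 with ?L3 = ?R3 =>
  pickc ltac:(fun c1 => pickc ltac:(fun c2 => pickc ltac:(fun c3 =>
    apply (Cfin3 _ _ L1 R1 L2 R2 L3 R3 c1 c2 c3); [ring | exact H1 | exact H2 | exact H3])))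
  end end end.
Ltac lin2 H1 H2 := lin3 H1 H2 (@eq_refl C C0).
Ltac lin1 H1 := lin3 H1 (@eq_refl C C0) (@eq_refl C C0).

Lemma sig_sig x : sig (sig x) = x.
Proof. destruct x; unfold sig; simpl; f_equal; ring. Qed.

Lemma cyc1E phi (Hl : local 1 phi) (Hc : twisted_cyclic_std 1 (sigma_conj phi)) x0 x1 :
  P2 phi x0 x1 = Copp (P2 phi x1 (sig x0)).
Proof.
  pose proof (Hc (fun i => match i with O => x0 | _ => sig x1 end)) as H.
  unfold sigma_conj, sgn in H; simpl in H. rewrite !(loc2 phi Hl) in H; simpl in H.
  rewrite sig_sig in H. rewrite H. ring.
Qed.

Lemma cyc1I phi (Hl : local 1 phi) (H : forall x0 x1, P2 phi x0 x1 = Copp (P2 phi x1 (sig x0))) :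
  twisted_cyclic_std 1 (sigma_conj phi).
Proof.
  intro a. unfold sigma_conj, sgn; simpl. rewrite !(loc2 phi Hl); simpl.
  rewrite (H (a O)). ring.
Qed.

Lemma cyc2E phi (Hl : local 2 phi) (Hc : twisted_cyclic_std 2 (sigma_conj phi)) x0 x1 x2 :
  P3 phi x0 x1 x2 = P3 phi x2 (sig x0) x1.
Proof.
  pose proof (Hc (fun i => match i with O => x0 | 1%nat => sig x1 | _ => sig x2 end)) as H.
  unfold sigma_conj, sgn in H; simpl in H. rewrite !(loc3 phi Hl) in H; simpl in H.
  rewrite !sig_sig in H. rewrite H. ring.
Qed.

Lemma cyc2I phi (Hl : local 2 phi) (H : forall x0 x1 x2, P3 phi x0 x1 x2 = P3 phi x2 (sig x0) x1) :
  twisted_cyclic_std 2 (sigma_conj phi).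
Proof.
  intro a. unfold sigma_conj, sgn; simpl. rewrite !(loc3 phi Hl); simpl.
  rewrite (H (a O)). ring.
Qed.

Lemma cyc0I phi (Hl : local 0 phi) (H : forall x, P1 phi x = P1 phi (sig x)) :
  twisted_cyclic_std 0 (sigma_conj phi).
Proof.
  intro a. unfold sigma_conj, sgn; simpl. rewrite !(loc1 phi Hl); simpl.
  rewrite <- H. ring.
Qed.

Lemma h1_loc t phi : local 0 (h1 t phi).
Proof. intros a a' H. unfold h1. rewrite (H O) by lia. reflexivity. Qed.
Lemma h2_loc t phi : local 1 (h2 t phi).
Proof. intros a a' H. unfold h2. rewrite (H O), (H 1%nat) by lia. reflexivity. Qed.

Ltac autoscale H :=
  match goal with |- context [Cmul (lam_pow ?t ?e) ?X] =>
    match type of H with context [Cmul (lam_pow t ?e') X] =>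
      scaleH t H (e - e')%Z end end.
Ltac autofin H := autoscale H; revert H; unify_atoms; intro H; fin1 H.

Ltac linc c1 H1 c2 H2 c3 H3 :=
  match type of H1 with ?L1 = ?R1 => match type of H2 with ?L2 = ?R2 => match type of H3 with ?L3 = ?R3 =>
    apply (Cfin3 _ _ L1 R1 L2 R2 L3 R3 c1 c2 c3); [ring | exact H1 | exact H2 | exact H3]
  end end end.

Lemma hom1 t phi (Hl : local 1 phi) (Hb : forall a, hoch_b t 1 phi a = C0) a :
  hoch_b t 0 (h1 t phi) a = phi a.
Proof.
  pose proof (Hb (fun j => match j with O => mulb (a O) (sig (kk (mulb (a 1%nat) (a O))))
                              | 1%nat => sig (kk (mulb (a 1%nat) (a O))) | _ => a 1%nat end)) as H.
  revert H.
  unfold hoch_b, h1, mulc, sgn, merge; simpl Csum; simpl Nat.even; cbv iota beta.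
  rewrite !(loc2 phi Hl). simpl.
  destruct (a O) as [p0 q0]; destruct (a 1%nat) as [p1 q1].
  unfold kk, mulb, sig; simpl.
  rewrite (divshift (p0 + - p1) (p1 + p0) p1) by ring.
  rewrite (divshift (q0 + - q1) (q1 + q0) q1) by ring.
  set (k1 := Z.div (p1 + p0) 2). set (k2 := Z.div (q1+q0) 2).
  unfold hE; simpl.
  cnorm. intros H.
  scaleH t H (- ((q0 + - k2) * - - k1))%Z.
  revert H; unify_atoms; intro H.
  fin1 H.
Qed.

Lemma hom2 t phi (Hl : local 2 phi) (Hb : forall a, hoch_b t 2 phi a = C0) a :
  hoch_b t 1 (h2 t phi) a = phi a.
Proof.
  pose proof (Hb (fun j => match j with O => mulb (a O) (sig (kk (mulb (mulb (a O) (a 1%nat)) (a 2%nat))))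
                              | 1%nat => sig (kk (mulb (mulb (a O) (a 1%nat)) (a 2%nat)))
                              | 2%nat => a 1%nat | _ => a 2%nat end)) as H.
  revert H.
  unfold hoch_b, h2, mulc, sgn, merge; simpl Csum; simpl Nat.even; cbv iota beta.
  rewrite !(loc3 phi Hl). simpl.
  destruct (a O) as [p0 q0]; destruct (a 1%nat) as [p1 q1]; destruct (a 2%nat) as [p2 q2].
  unfold kk, mulb, sig; simpl.
  rewrite (divshift (p0 + - p1 + p2) (p0 + p1 + p2) p1) by ring.
  rewrite (divshift (q0 + - q1 + q2) (q0 + q1 + q2) q1) by ring.
  replace (p0 + (p1 + p2))%Z with (p0+p1+p2)%Z by ring.
  replace (q0 + (q1 + q2))%Z with (q0+q1+q2)%Z by ring.
  replace (p2 + p0 + p1)%Z with (p0+p1+p2)%Z by ring.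
  replace (q2 + q0 + q1)%Z with (q0+q1+q2)%Z by ring.
  set (k1 := Z.div (p0 + p1 + p2) 2). set (k2 := Z.div (q0+q1+q2) 2).
  unfold hE; simpl.
  cnorm. intros H.
  scaleH t H (- ((q0 + - k2) * - - k1))%Z.
  revert H; unify_atoms; intro H.
  fin1 H.
Qed.

Lemma part1 t : HC_vanishes t 0.
Proof.
  intros phi [[Hl Hc] Hb]. exists (h1 t phi). split; [split|].
  - apply h1_loc.
  - apply cyc0I; [apply h1_loc|]. intro x.
    pose proof (hom1 t phi Hl Hb (fun j => match j with O => (0,0)%Z | _ => sig x end)) as E1.
    pose proof (hom1 t phi Hl Hb (fun j => match j with O => sig x | _ => (0,0)%Z end)) as E2.
    pose proof (cyc1E phi Hl Hc (0,0)%Z (sig x)) as E3.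
    unfold hoch_b, mulc, sgn in E1, E2; simpl in E1, E2.
    rewrite !(loc1 _ (h1_loc t phi)) in E1, E2. rewrite !(loc2 phi Hl) in E1, E2.
    simpl in *.
    destruct x as [p q]. unfold mulb, sig in *; simpl in *.
    cnorm_in E1; cnorm_in E2.
    revert E1 E2 E3; unify_atoms; intros E1 E2 E3.
    rewrite ?lam0, ?Cmul_1l in *.

    lin3 E1 E2 E3.
  - intro a. symmetry. apply hom1; auto.
Qed.

Definition c0 (g : basis -> C) : cochain := fun a => g (a O).
Definition tauf t (r : basis) (y : basis) : C :=
  if (Z.eqb (Z.modulo (fst y) 2) (fst r) && Z.eqb (Z.modulo (snd y) 2) (snd r))%bool
  then lam_pow t (- (fst r * snd (kk y) + snd r * fst (kk y) + 2 * fst (kk y) * snd (kk y)))%Z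
  else C0.

Definition rep (k : nat) : basis :=
  match k with O => (0,0)%Z | 1%nat => (1,0)%Z | 2%nat => (0,1)%Z | _ => (1,1)%Z end.

Lemma tau_rep t j k : (j < 4)%nat -> (k < 4)%nat ->
  tauf t (rep j) (rep k) = if Nat.eqb j k then C1 else C0.
Proof.
  intros Hj Hk.
  destruct j as [|[|[|[|j]]]]; try lia; destruct k as [|[|[|[|k]]]]; try lia;
  unfold tauf, rep, kk; simpl; rewrite ?lam0; reflexivity.
Qed.

Arguments Z.mul : simpl never.

Definition Sc t (chi : cochain) : cochain := fun a =>
  Cmul (mulc t (a O) (sig (a 1%nat))) (Cmul (mulc t (mulb (a O) (sig (a 1%nat))) (sig (a 2%nat)))
    (chi (fun _ => mulb (mulb (a O) (sig (a 1%nat))) (sig (a 2%nat))))).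
Definition rho t (chi : cochain) : cochain := fun a =>
  Cmul (mulc t (a O) (sig (a 1%nat))) (chi (fun _ => mulb (a O) (sig (a 1%nat)))).
Definition trace t chi := local 0 chi /\ forall a, hoch_b t 0 chi a = C0.

Lemma Sc_loc t chi : local 2 (Sc t chi).
Proof. intros a a' H. unfold Sc. rewrite (H O), (H 1%nat), (H 2%nat) by lia. reflexivity. Qed.
Lemma rho_loc t chi : local 1 (rho t chi).
Proof. intros a a' H. unfold rho. rewrite (H O), (H 1%nat) by lia. reflexivity. Qed.

Ltac expand_tr t chi Hl Htr x y :=
  let H := fresh "Tr" in
  pose proof (Htr (fun j => match j with O => x | _ => y end)) as H;
  unfold hoch_b, mulc, sgn in H; simpl in H; rewrite ?(loc1 chi Hl) in H; simpl in H.

Lemma Sc_cyc t chi (Ht : trace t chi) x0 x1 x2 :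
  P3 (Sc t chi) x0 x1 x2 = P3 (Sc t chi) x2 (sig x0) x1.
Proof.
  destruct Ht as [Hl Htr].
  expand_tr t chi Hl Htr (mulb x0 (sig x1)) x2.
  unfold P3, Sc, mulc; simpl. rewrite !(loc1 chi Hl).
  destruct x0 as [p0 q0], x1 as [p1 q1], x2 as [p2 q2]. unfold mulb, sig in *; simpl in *.
  cnorm; cnorm_in Tr.
  revert Tr; unify_atoms; intro Tr. autofin Tr.
Qed.

Lemma Sc_cocycle t chi (Ht : trace t chi) a : hoch_b t 2 (Sc t chi) a = C0.
Proof.
  destruct Ht as [Hl Htr].
  expand_tr t chi Hl Htr (mulb (mulb (a O) (sig (a 1%nat))) (sig (a 2%nat))) (a 3%nat).
  unfold hoch_b, Sc, mulc, sgn, merge; simpl. rewrite !(loc1 chi Hl). simpl.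
  destruct (a O) as [p0 q0], (a 1%nat) as [p1 q1], (a 2%nat) as [p2 q2], (a 3%nat) as [p3 q3].
  unfold mulb, sig in *; simpl in *.
  cnorm; cnorm_in Tr.
  revert Tr; unify_atoms; intro Tr. autofin Tr.
Qed.

Lemma rho_b t chi (Ht : trace t chi) a : hoch_b t 1 (rho t chi) a = Sc t chi a.
Proof.
  destruct Ht as [Hl Htr].
  expand_tr t chi Hl Htr (mulb (a O) (sig (a 1%nat))) (a 2%nat).
  unfold hoch_b, Sc, rho, mulc, sgn, merge; simpl. rewrite !(loc1 chi Hl). simpl.
  destruct (a O) as [p0 q0], (a 1%nat) as [p1 q1], (a 2%nat) as [p2 q2].
  unfold mulb, sig in *; simpl in *.
  cnorm; cnorm_in Tr.
  revert Tr; unify_atoms; intro Tr. autofin Tr.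
Qed.

Lemma trace_sig t chi (Ht : trace t chi) x : P1 chi (sig x) = P1 chi x.
Proof.
  destruct Ht as [Hl Htr].
  expand_tr t chi Hl Htr (0,0)%Z x.
  destruct x as [p q]. unfold mulb, sig in *; simpl in *.
  cnorm_in Tr. revert Tr; unify_atoms; intro Tr. rewrite ?lam0, ?Cmul_1l in *. lin1 Tr.
Qed.

Lemma bb0 t M (Hl : local 0 M) a : hoch_b t 1 (hoch_b t 0 M) a = C0.
Proof.
  unfold hoch_b, mulc, sgn, merge; simpl. rewrite !(loc1 M Hl). simpl.
  destruct (a O) as [p0 q0], (a 1%nat) as [p1 q1], (a 2%nat) as [p2 q2].
  unfold mulb, sig in *; simpl in *.
  cnorm. unify_atoms. ring.
Qed.

Notation C4 := (Cadd C1 (Cadd C1 (Cadd C1 C1))).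

Lemma b1_lin t (f g h : cochain) a :
  hoch_b t 1 (fun a => Cadd (Cmul C4 (f a)) (Copp (Cadd (g a) (h a)))) a =
  Cadd (Cmul C4 (hoch_b t 1 f a)) (Copp (Cadd (hoch_b t 1 g a) (hoch_b t 1 h a))).
Proof. unfold hoch_b; simpl. ring. Qed.

Lemma b1_scal t (q : C) (f : cochain) a :
  hoch_b t 1 (fun a => Cmul q (f a)) a = Cmul q (hoch_b t 1 f a).
Proof. unfold hoch_b; simpl. ring. Qed.

Lemma b1_sub t (f g : cochain) a :
  hoch_b t 1 (fun a => Cadd (f a) (Copp (g a))) a = Cadd (hoch_b t 1 f a) (Copp (hoch_b t 1 g a)).
Proof. unfold hoch_b; simpl. ring. Qed.


Lemma c0_loc g : local 0 (c0 g).
Proof. intros a a' H. unfold c0. rewrite (H O) by lia. reflexivity. Qed.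

Lemma modshift (x y a : Z) : x = (y - 2 * a)%Z -> Z.modulo x 2 = Z.modulo y 2.
Proof. intros ->. replace (y - 2*a)%Z with (y + (-a) * 2)%Z by ring. apply Z_mod_plus. lia. Qed.

Lemma tau_trace t r : trace t (c0 (tauf t r)).
Proof.
  split; [apply c0_loc|]. intro a.
  unfold hoch_b, mulc, sgn, c0, tauf, kk; simpl.
  destruct (a O) as [p0 q0], (a 1%nat) as [p1 q1], r as [r1 r2].
  unfold mulb, sig; simpl.
  rewrite (modshift (p0 + - p1) (p1 + p0) p1) by ring.
  rewrite (modshift (q0 + - q1) (q1 + q0) q1) by ring.
  rewrite (divshift (p0 + - p1) (p1 + p0) p1) by ring.
  rewrite (divshift (q0 + - q1) (q1 + q0) q1) by ring.
  destruct (Z.eqb ((p1 + p0) mod 2) r1 && Z.eqb ((q1 + q0) mod 2) r2)%bool eqn:E; [|ring].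
  apply andb_prop in E; destruct E as [E1 E2]. apply Z.eqb_eq in E1, E2.
  pose proof (Z_div_mod_eq_full (p1 + p0) 2) as D1.
  pose proof (Z_div_mod_eq_full (q1 + q0) 2) as D2.
  set (m1 := ((p1 + p0) / 2)%Z) in *. set (m2 := ((q1 + q0) / 2)%Z) in *.
  clearbody m1 m2.
  assert (p0 = 2 * m1 + r1 - p1)%Z by lia. assert (q0 = 2 * m2 + r2 - q1)%Z by lia. subst p0 q0.
  rewrite ?lam_add. unify_atoms. ring.
Qed.

Lemma decomp t chi (Ht : trace t chi) y :
  P1 chi y = Csum (fun k => Cmul (tauf t (rep k) y) (P1 chi (rep k))) 4.
Proof.
  destruct Ht as [Hl Htr]. destruct y as [y1 y2].
  pose proof (Z_div_mod_eq_full y1 2) as D1. pose proof (Z_div_mod_eq_full y2 2) as D2.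
  pose proof (Z.mod_pos_bound y1 2 ltac:(lia)) as B1. pose proof (Z.mod_pos_bound y2 2 ltac:(lia)) as B2.
  expand_tr t chi Hl Htr ((y1 mod 2) + y1 / 2, (y2 mod 2) + y2 / 2)%Z (y1 / 2, y2 / 2)%Z.
  unfold Csum, tauf, kk, rep; cbn [fst snd].
  set (m1 := (y1 / 2)%Z) in *. set (m2 := (y2 / 2)%Z) in *.
  set (r1 := (y1 mod 2)%Z) in *. set (r2 := (y2 mod 2)%Z) in *.
  clearbody m1 m2 r1 r2. subst y1 y2.
  unfold mulb, sig in *; simpl in *.
  assert (r1 = 0 \/ r1 = 1)%Z as [-> | ->] by lia; assert (r2 = 0 \/ r2 = 1)%Z as [-> | ->] by lia;
  simpl; cnorm_in Tr; revert Tr; unify_atoms; intro Tr; autofin Tr.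
Qed.

Definition Zc t phi : cochain := fun a =>
  Cadd (h2 t phi a) (h2 t phi (fun j => match j with O => a 1%nat | _ => sig (a O) end)).
Definition T4 t phi : cochain := fun a =>
  Cadd (P2 (Zc t phi) (0,0)%Z (sig (a O))) (P2 (Zc t phi) (0,0)%Z (a O)).
Definition M4 t phi : cochain := fun a =>
  Cadd (Cadd (P2 (h2 t phi) (0,0)%Z (sig (a O))) (P2 (h2 t phi) (sig (a O)) (0,0)%Z))
       (Copp (Cadd (P2 (h2 t phi) (0,0)%Z (a O)) (P2 (h2 t phi) (a O) (0,0)%Z))).
Definition chi4 t phi : cochain := fun a =>
  Cadd (Cmul C4 (h2 t phi a)) (Copp (Cadd (rho t (T4 t phi) a) (hoch_b t 0 (M4 t phi) a))).

Lemma Zc_loc t phi : local 1 (Zc t phi).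
Proof. intros a a' H. unfold Zc, h2. rewrite (H O), (H 1%nat) by lia. reflexivity. Qed.
Lemma T4_loc t phi : local 0 (T4 t phi).
Proof. intros a a' H. unfold T4. rewrite (H O) by lia. reflexivity. Qed.
Lemma M4_loc t phi : local 0 (M4 t phi).
Proof. intros a a' H. unfold M4. rewrite (H O) by lia. reflexivity. Qed.

Lemma P2Zc t phi x0 x1 : P2 (Zc t phi) x0 x1 = Cadd (P2 (h2 t phi) x0 x1) (P2 (h2 t phi) x1 (sig x0)).
Proof. unfold P2 at 1, Zc. rewrite !(loc2 _ (h2_loc t phi)). reflexivity. Qed.

Ltac hom2_at t phi Hl Hb a :=
  let H := fresh "E" in
  pose proof (hom2 t phi Hl Hb a) as H;
  unfold hoch_b, mulc, sgn, merge in H; simpl in H;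
  rewrite ?(loc2 _ (h2_loc t phi)), ?(loc3 phi Hl) in H; simpl in H.

Lemma Zrel t phi (Hl : local 2 phi) (Hc : twisted_cyclic_std 2 (sigma_conj phi))
  (Hb : forall a, hoch_b t 2 phi a = C0) x0 x1 :
  P2 (Zc t phi) x0 x1 = Cmul (lam_pow t (snd x0 * - fst x1)) (P2 (Zc t phi) (0,0)%Z (mulb x1 (sig x0))).
Proof.
  hom2_at t phi Hl Hb (fun j => match j with O => (0,0)%Z | 1%nat => sig x0 | _ => x1 end).
  hom2_at t phi Hl Hb (fun j => match j with O => x1 | 1%nat => (0,0)%Z | _ => sig x0 end).
  pose proof (cyc2E phi Hl Hc (0,0)%Z (sig x0) x1) as E3.
  rewrite !P2Zc.
  destruct x0 as [p0 q0], x1 as [p1 q1]. unfold mulb, sig in *; simpl in *.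
  cnorm; cnorm_in E; cnorm_in E0.
  revert E E0 E3; unify_atoms; intros E E0 E3. rewrite ?lam0, ?Cmul_1l in *.
  lin3 E E0 E3.
Qed.

Lemma T4_trace t phi (Hl : local 2 phi) (Hc : twisted_cyclic_std 2 (sigma_conj phi))
  (Hb : forall a, hoch_b t 2 phi a = C0) : trace t (T4 t phi).
Proof.
  split; [apply T4_loc|]. intro a.
  assert (Nid : Cadd (Cadd (P2 (Zc t phi) (a O) (sig (a 1%nat))) (Copp (P2 (Zc t phi) (sig (a 1%nat)) (sig (a O)))))
                     (Cadd (P2 (Zc t phi) (sig (a O)) (a 1%nat)) (Copp (P2 (Zc t phi) (a 1%nat) (a O)))) = C0).
  { rewrite !P2Zc, !sig_sig. ring. }
  rewrite (Zrel t phi Hl Hc Hb (a O)), (Zrel t phi Hl Hc Hb (sig (a 1%nat))),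
          (Zrel t phi Hl Hc Hb (sig (a O))), (Zrel t phi Hl Hc Hb (a 1%nat)) in Nid.
  unfold hoch_b, mulc, sgn; simpl. rewrite !(loc1 _ (T4_loc t phi)). unfold P1, T4.
  destruct (a O) as [p0 q0], (a 1%nat) as [p1 q1]. unfold mulb, sig in *; simpl in *.
  cnorm; cnorm_in Nid.
  revert Nid; unify_atoms; intro Nid. autofin Nid.
Qed.

Lemma chi4_loc t phi : local 1 (chi4 t phi).
Proof.
  intros a a' H. unfold chi4, hoch_b, mulc, sgn; simpl.
  rewrite !(loc2 _ (h2_loc t phi)), !(loc2 _ (rho_loc t (T4 t phi))), !(loc1 _ (M4_loc t phi)); simpl.
  rewrite (H O), (H 1%nat) by lia. reflexivity.
Qed.

Lemma chi4_cyc t phi (Hl : local 2 phi) (Hc : twisted_cyclic_std 2 (sigma_conj phi))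
  (Hb : forall a, hoch_b t 2 phi a = C0) x0 x1 :
  P2 (chi4 t phi) x0 x1 = Copp (P2 (chi4 t phi) x1 (sig x0)).
Proof.
  pose proof (Zrel t phi Hl Hc Hb x0 x1) as E1.
  pose proof (proj2 (T4_trace t phi Hl Hc Hb) (fun j => match j with O => x0 | _ => x1 end)) as E2.
  unfold hoch_b, mulc, sgn in E2; simpl in E2. rewrite !(loc1 _ (T4_loc t phi)) in E2.
  unfold P2 at 1 2, chi4, hoch_b, rho, mulc, sgn; simpl.
  rewrite !(loc2 _ (h2_loc t phi)), !(loc1 _ (T4_loc t phi)), !(loc1 _ (M4_loc t phi)); simpl.
  unfold P1, T4, M4 in *. rewrite !P2Zc in *.
  destruct x0 as [p0 q0], x1 as [p1 q1]. unfold mulb, sig in *; simpl in *.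
  cnorm; cnorm_in E1; cnorm_in E2.
  revert E1 E2; unify_atoms; intros E1 E2. rewrite ?lam0, ?Cmul_1l in *.
  linc constr:(C4) E1 C1 E2 C0 (@eq_refl C C0).
Qed.

Lemma chi4_b t phi (Hl : local 2 phi) (Hc : twisted_cyclic_std 2 (sigma_conj phi))
  (Hb : forall a, hoch_b t 2 phi a = C0) a :
  hoch_b t 1 (chi4 t phi) a = Cadd (Cmul C4 (phi a)) (Copp (Sc t (T4 t phi) a)).
Proof.
  unfold chi4. rewrite (b1_lin t (h2 t phi) (rho t (T4 t phi)) (hoch_b t 0 (M4 t phi))).
  rewrite (hom2 t phi Hl Hb), (rho_b t _ (T4_trace t phi Hl Hc Hb)), (bb0 t _ (M4_loc t phi)).
  ring.
Qed.

Definition Fk t (k : nat) : cochain := Sc t (c0 (tauf t (rep k))).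
Definition q4 : C := mkC (/4) 0.
Lemma q4C4 : Cmul q4 C4 = C1.
Proof. apply Ceq; unfold q4, C1; simpl; field. Qed.
Lemma C4_cancel z : Cmul C4 z = C0 -> z = C0.
Proof.
  intro H. pose proof (f_equal Re H) as H1. pose proof (f_equal Im H) as H2.
  destruct z as [x y]; simpl in *. apply Ceq; simpl; lra.
Qed.

Lemma Fk_cc t k : is_cyclic_cocycle t 2 (Fk t k).
Proof.
  unfold Fk. split; [split|].
  - apply Sc_loc.
  - apply cyc2I; [apply Sc_loc|]. apply Sc_cyc, tau_trace.
  - apply Sc_cocycle, tau_trace.
Qed.



Lemma qlemma X S : Cadd X (Copp (Cmul q4 S)) = Cmul q4 (Cadd (Cmul C4 X) (Copp S)).
Proof. destruct X, S; apply Ceq; unfold q4; simpl; field. Qed.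

Lemma P2_scal (q : C) (g : cochain) x y : P2 (fun a => Cmul q (g a)) x y = Cmul q (P2 g x y).
Proof. reflexivity. Qed.

Lemma span t phi (Hl : local 2 phi) (Hc : twisted_cyclic_std 2 (sigma_conj phi))
  (Hb : forall a, hoch_b t 2 phi a = C0) :
  is_cyclic_coboundary t 1
    (fun a => Cadd (phi a) (Copp (lin4 (fun k => Cmul q4 (P1 (T4 t phi) (rep k))) (Fk t) a))).
Proof.
  exists (fun a => Cmul q4 (chi4 t phi a)). split; [split|].
  - intros a a' H. rewrite (chi4_loc t phi a a' H). reflexivity.
  - apply cyc1I.
    + intros a a' H. rewrite (chi4_loc t phi a a' H). reflexivity.
    + intros x0 x1. rewrite !P2_scal, (chi4_cyc t phi Hl Hc Hb). ring.
  - intro a. rewrite b1_scal, (chi4_b t phi Hl Hc Hb).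
    unfold Sc at 1. change (T4 t phi (fun _ => mulb (mulb (a O) (sig (a 1%nat))) (sig (a 2%nat))))
      with (P1 (T4 t phi) (mulb (mulb (a O) (sig (a 1%nat))) (sig (a 2%nat)))).
    rewrite (decomp t _ (T4_trace t phi Hl Hc Hb)).
    unfold lin4, Fk, Sc, c0; simpl.
    rewrite <- qlemma. ring.
Qed.

Definition tauc t (c : nat -> C) : cochain := fun a => Csum (fun k => Cmul (c k) (tauf t (rep k) (a O))) 4.

Lemma tauc_trace t c : trace t (tauc t c).
Proof.
  split. { intros a a' H. unfold tauc. rewrite (H O) by lia. reflexivity. }
  intro a.
  pose proof (proj2 (tau_trace t (rep 0)) a) as H0. pose proof (proj2 (tau_trace t (rep 1)) a) as H1.
  pose proof (proj2 (tau_trace t (rep 2)) a) as H2. pose proof (proj2 (tau_trace t (rep 3)) a) as H3.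
  transitivity (Cadd (Cmul (c 0%nat) (hoch_b t 0 (c0 (tauf t (rep 0))) a))
               (Cadd (Cmul (c 1%nat) (hoch_b t 0 (c0 (tauf t (rep 1))) a))
               (Cadd (Cmul (c 2%nat) (hoch_b t 0 (c0 (tauf t (rep 2))) a))
                     (Cmul (c 3%nat) (hoch_b t 0 (c0 (tauf t (rep 3))) a))))).
  - unfold hoch_b, tauc, c0; simpl. ring.
  - rewrite H0, H1, H2, H3. ring.
Qed.

Lemma lin4_Sc t c a : lin4 c (Fk t) a = Sc t (tauc t c) a.
Proof. unfold lin4, Fk, Sc, tauc, c0; simpl. ring. Qed.

Definition Dc t c chi : cochain := fun a => Cadd (chi a) (Copp (rho t (tauc t c) a)).
Lemma Dc_eq t c chi a : Dc t c chi a = Cadd (chi a) (Copp (rho t (tauc t c) a)).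
Proof. reflexivity. Qed.

Lemma indep t c chi (Hl : local 1 chi) (Hc : twisted_cyclic_std 1 (sigma_conj chi))
  (H : forall a, lin4 c (Fk t) a = hoch_b t 1 chi a) k : (k < 4)%nat -> c k = C0.
Proof.
  intro Hk.
  assert (Ht : trace t (tauc t c)) by apply tauc_trace.
  pose proof (Dc_eq t c chi) as DE.
  set (D := Dc t c chi).
  assert (HlD : local 1 D).
  { intros a a' E. rewrite !DE. rewrite (Hl a a' E), (rho_loc t (tauc t c) a a' E). reflexivity. }
  assert (HbD : forall a, hoch_b t 1 D a = C0).
  { intro a. unfold D, Dc. rewrite b1_sub, <- H, lin4_Sc, (rho_b t (tauc t c) Ht). ring. }
  assert (Key : forall x, Cadd (P1 (tauc t c) x) (P1 (tauc t c) x) = Cadd (P1 (h1 t D) (sig x)) (Copp (P1 (h1 t D) x))).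
  { intro x.
    pose proof (hom1 t D HlD HbD (fun j => match j with O => x | _ => (0,0)%Z end)) as E1.
    pose proof (hom1 t D HlD HbD (fun j => match j with O => (0,0)%Z | _ => sig x end)) as E2.
    pose proof (cyc1E chi Hl Hc x (0,0)%Z) as E3.
    unfold hoch_b, mulc, sgn in E1, E2; simpl in E1, E2.
    rewrite !(loc1 _ (h1_loc t D)) in E1, E2. rewrite !DE in E1, E2. unfold rho, mulc in E1, E2.
    rewrite !(loc2 chi Hl), !(loc1 _ (proj1 Ht)) in E1, E2. simpl in *.
    destruct x as [p q]. unfold mulb, sig in *; simpl in *.
    cnorm_in E1; cnorm_in E2.
    revert E1 E2 E3; unify_atoms; intros E1 E2 E3. rewrite ?lam0, ?Cmul_1l in *.
    lin3 E1 E2 E3. }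
  assert (Zt : forall x, P1 (tauc t c) x = C0).
  { intro x. apply C4_cancel.
    pose proof (Key x) as K1. pose proof (Key (sig x)) as K2. rewrite sig_sig in K2.
    pose proof (trace_sig t _ Ht x) as TS.
    lin3 K1 K2 TS. }
  pose proof (Zt (rep k)) as Hz. unfold P1, tauc in Hz. cbn [Csum] in Hz.
  rewrite !tau_rep in Hz by lia.
  destruct k as [|[|[|[|k]]]]; try lia; simpl in Hz; rewrite <- Hz; ring.
Qed.

Theorem part2 t : HC_dim4 t 1.
Proof.
  exists (Fk t). split; [|split].
  - intros k _. apply Fk_cc.
  - intros phi [[Hl Hc] Hb]. eexists. apply (span t phi Hl Hc Hb).
  - intros c [chi [[Hl Hc] H]]. apply (indep t c chi Hl Hc H).
Qed.


Theorem mainTheorem11 (theta : R)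
  (Hirr : forall p q : Z, q <> 0%Z -> theta * IZR q <> IZR p) :
  HC_vanishes theta 0 /\ HC_dim4 theta 1.
Proof.
  split; [apply part1 | apply part2].
Qed.
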